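(* Let $\alpha\le0$ and $\beta<0$. Then for every integer $n\ge2$ and every $1\le k\le n-1$, \[ \big(S_{\alpha,\beta}(n,k)\big)^2\ge\Big(1+\frac1k\Big)\Big(1+\frac1{n-k}\Big)S_{\alpha,\beta}(n,k+1)\,S_{\alpha,\beta}(n,k-1); \] in particular the sequence $(S_{\alpha,\beta}(n,k))_{0\le k\le n}$ is log-concave.
   Context: For real $a$ and integer $n\ge 1$, $\langle a\rangle_n:=a(a+1)\cdots(a+n-1)$ and $\langle a\rangle_0:=1$. For real $\alpha,\beta$ and integers $0\le k\le n$, $S_{\alpha,\beta}(n,k):=\frac{1}{k!}\sum_{j=0}^{k}(-1)^{k-j}\binom{k}{j}\langle-\alpha-\beta j\rangle_n$. *)

(* Defs.v *)
(* the statement is purely algebraic, so we state it over an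
   arbitrary real field R (this includes the reals). *)
From HB Require Import structures.
From mathcomp Require Import all_boot all_order all_algebra.
Set Implicit Arguments. Unset Strict Implicit. Unset Printing Implicit Defensive.
Import Order.TTheory GRing.Theory Num.Theory.
Local Open Scope ring_scope.

Definition rising {R : pzRingType} (a : R) (n : nat) : R :=
  \prod_(i < n) (a + i%:R).

Definition Sab {R : fieldType} (alpha beta : R) (n k : nat) : R :=
  (k`!%:R)^-1 * \sum_(j < k.+1)
     (-1) ^+ (k - j) * ('C(k, j))%:R * rising (- alpha - beta * j%:R) n.

(* Main.v *)
Require Import Defs.
From HB Require Import structures.
From mathcomp Require Import all_boot all_order all_algebra.
From mathcomp Require Import ring lra.
Import Order.TTheory GRing.Theory Num.Theory.
Local Open Scope ring_scope.
Set Implicit Arguments. Unset Strict Implicit.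
Section D.
Variable R : realFieldType.
Definition D (g : nat -> R) (k : nat) : R :=
  \sum_(j < k.+1) (-1) ^+ (k - j) * ('C(k, j))%:R * g j.

Lemma D0 g : D g 0 = g 0%N.
Proof. by rewrite /D big_ord_recl big_ord0 subnn bin0 expr0 mul1r mul1r addr0. Qed.

Lemma DS g k : D g k.+1 = D (fun j => g j.+1) k - D g k.
Proof.
rewrite /D big_ord_recl /= subn0 bin0 mulr1.
under eq_bigr => i _ do rewrite /bump /= add1n subSS binS natrD mulrDr mulrDl.
rewrite big_split /=.
rewrite [X in _ + (X + _)]big_ord_recr /= bin_small // mulr0 mul0r addr0.
rewrite [X in _ = _ - X]big_ord_recl /= subn0 bin0 mulr1.
rewrite opprD addrCA [_ + (_ + _)]addrC addrA; congr (_ + _).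
rewrite exprS mulN1r -mulNr.
  by rewrite addrC.
rewrite -sumrN.
apply: eq_bigr => i _.
rewrite /bump /= add1n.
have -> : (k - i = (k - i.+1).+1)%N by rewrite subnSK.
by rewrite exprS !mulN1r !mulNr.
Qed.

Lemma DM g k : D (fun j => j%:R * g j) k.+1 = k.+1%:R * D (fun j => g j.+1) k.
Proof.
rewrite /D big_ord_recl /= mul0r mulr0 add0r mulr_sumr.
apply: eq_bigr => i _; rewrite /bump /= add1n subSS.
have H := mul_bin_diag k.+1 i; rewrite /= in H.
have H' : (i.+1%:R * 'C(k.+1,i.+1)%:R = k.+1%:R * 'C(k,i)%:R :> R) by rewrite -!natrM -H.
transitivity ((-1)^+(k-i) * (i.+1%:R * 'C(k.+1,i.+1)%:R) * g i.+1); first ring.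
rewrite H'; ring.
Qed.

Lemma DL c d g h k : D (fun j => c * g j + d * h j) k = c * D g k + d * D h k.
Proof.
rewrite /D !mulr_sumr -big_split /=; apply: eq_bigr => i _; ring.
Qed.
End D.
Lemma step_ineq (R : realFieldType) (a b X Y Z W k m : R) :
  0 <= a -> 0 <= b -> 1 <= k -> 1 <= m ->
  0 <= X -> 0 <= Y -> 0 <= Z -> 0 <= W ->
  (k+1) * m * (Y * Z) <= k * (m-1) * (X * X) ->
  k * (m+1) * (W * X) <= (k-1) * m * (Y * Y) ->
  (k+1) * (m+1) * (W * Z) <= (k-1) * (m-1) * (X * Y) ->
  (k+1) * (m+1) * (((a+b * (k-1)) * Y + b * W) * ((a+b * (k+1)) * Z + b * X))
   <= k * m * (((a+b * k) * X+b * Y) * ((a+b * k) * X+b * Y)).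
Proof.
move=> a0 b0 k1 m1 X0 Y0 Z0 W0 H1 H2 H3.
have km0 : 0 < k * m by apply: mulr_gt0; lra.
have c1 : 0 <= a + b * (k-1) by have := mulr_ge0 b0 (_ : 0 <= k-1); nra.
have c2 : 0 <= a + b * (k+1) by nra.
set L := (k+1) * (m+1) * _.
have E1 : k * m * (k+1) * (m+1) * ((a+b * (k-1)) * (a+b * (k+1))) * (Y * Z)
   <= k * (m+1) * ((a+b * (k-1)) * (a+b * (k+1))) * (k * (m-1) * (X * X)).
  have -> : k * m * (k+1) * (m+1) * ((a+b * (k-1)) * (a+b * (k+1))) * (Y * Z)
     = k * (m+1) * ((a+b * (k-1)) * (a+b * (k+1))) * ((k+1) * m * (Y * Z)) by ring.
  apply: ler_wpM2l => //; apply: mulr_ge0; [apply: mulr_ge0; lra| exact: mulr_ge0].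
have E2 : k * m * b * (a+b * (k+1)) * ((k+1) * (m+1) * (W * Z))
   <= k * m * b * (a+b * (k+1)) * ((k-1) * (m-1) * (X * Y)).
  apply: ler_wpM2l => //; apply: mulr_ge0 => //; apply: mulr_ge0 => //; lra.
have E3 : m * (k+1) * b * b * (k * (m+1) * (W * X)) <= m * (k+1) * b * b * ((k-1) * m * (Y * Y)).
  apply: ler_wpM2l => //; apply: mulr_ge0 => //; apply: mulr_ge0 => //; lra.
have XX : 0 <= X * X by nra.
have S : 0 <= k * k * (b * b * (k * k-1) + 2 * a * b * (k+m)) * (X * X).
  apply: mulr_ge0 => //; apply: mulr_ge0; first nra.
  have : 0 <= b * b * (k * k-1) by apply: mulr_ge0; nra.
  have : 0 <= a * b * (k+m) by apply: mulr_ge0; [apply: mulr_ge0|]; lra.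
  lra.
have Sq : 0 <= (m * b * Y + k * (b * m-a) * X)^+2 by apply: sqr_ge0.
have key : k * m * L <= k * m * (k * m * (((a+b * k) * X+b * Y) * ((a+b * k) * X+b * Y))).
  rewrite /L.
  have Eid : k * m * (k * m * (((a+b * k) * X+b * Y) * ((a+b * k) * X+b * Y))) - k * m * ((k+1) * (m+1) * (((a+b * (k-1)) * Y + b * W) * ((a+b * (k+1)) * Z + b * X)))
   = (m * b * Y + k * (b * m-a) * X)^+2 + k * k * (b * b * (k * k-1) + 2 * a * b * (k+m)) * (X * X)
     + (k * (m+1) * ((a+b * (k-1)) * (a+b * (k+1))) * (k * (m-1) * (X * X)) - k * m * (k+1) * (m+1) * ((a+b * (k-1)) * (a+b * (k+1))) * (Y * Z))
     + (k * m * b * (a+b * (k+1)) * ((k-1) * (m-1) * (X * Y)) - k * m * b * (a+b * (k+1)) * ((k+1) * (m+1) * (W * Z)))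
     + (m * (k+1) * b * b * ((k-1) * m * (Y * Y)) - m * (k+1) * b * b * (k * (m+1) * (W * X))).
    ring.
  rewrite -subr_ge0 Eid. lra.
by rewrite ler_pM2l in key.
Qed.

Section Rec.
Variable R : realFieldType.
Variables alpha beta : R.
Definition f n j := rising (- alpha - beta * j%:R) n.

Lemma SabE n k : Sab alpha beta n k = (k`!%:R)^-1 * D (f n) k.
Proof. by []. Qed.

Lemma D_ext (g h : nat -> R) k : (forall j, g j = h j) -> D g k = D h k.
Proof. by move=> E; rewrite /D; apply: eq_bigr => i _; rewrite E. Qed.

Lemma fS n j : f n.+1 j = (- alpha + n%:R) * f n j + (- beta) * (j%:R * f n j).
Proof. rewrite /f /rising big_ord_recr /=; ring. Qed.

Lemma Sab_rec0 n : Sab alpha beta n.+1 0 = (- alpha + n%:R) * Sab alpha beta n 0.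
Proof.
rewrite !SabE !D0 fS mul0r mulr0 addr0; ring.
Qed.

Lemma Sab_rec n k : Sab alpha beta n.+1 k.+1 =
  (- alpha + n%:R + - beta * k.+1%:R) * Sab alpha beta n k.+1 + (- beta) * Sab alpha beta n k.
Proof.
rewrite !SabE (D_ext _ (fS n)) DL DM.
rewrite factS natrM.
have h1 : (k.+1%:R : R) != 0 by rewrite pnatr_eq0.
have h2 : (k`!%:R : R) != 0 by rewrite pnatr_eq0 -lt0n fact_gt0.
have -> : D (fun j => f n j.+1) k = D (f n) k.+1 + D (f n) k by rewrite DS subrK.
have e1 : (1 + k%:R : R) = k.+1%:R by rewrite -natr1 addrC.
field; rewrite h2 /= e1; exact: h1.
Qed.

Lemma Sab00 : Sab alpha beta 0 0 = 1.
Proof. by rewrite SabE D0 /f /rising big_ord0 fact0 invr1 mul1r. Qed.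

Lemma Sab0S k : Sab alpha beta 0 k.+1 = 0.
Proof.
rewrite SabE DS.
have -> : D (fun j => f 0 j.+1) k = D (f 0) k by apply: D_ext => j; rewrite /f /rising !big_ord0.
by rewrite subrr mulr0.
Qed.
End Rec.

Lemma H3_lemma (R : realFieldType) (X Y Z W K M : R) :
  1 <= K -> 1 <= M -> 0 < X -> 0 < Y -> 0 <= Z -> 0 <= W ->
  (K + 1) * M * (Y * Z) <= K * (M - 1) * (X * X) ->
  K * (M + 1) * (W * X) <= (K - 1) * M * (Y * Y) ->
  (K + 1) * (M + 1) * (W * Z) <= (K - 1) * (M - 1) * (X * Y).
Proof.
move=> K1 M1 X0 Y0 Z0 W0 H1 H2.
have P := ler_pM _ _ H1 H2.
have p0 : 0 < K * M * (X * Y) by apply: mulr_gt0; [apply: mulr_gt0; lra| exact: mulr_gt0].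
rewrite -(ler_pM2l p0).
have E1 : K * M * (X * Y) * ((K + 1) * (M + 1) * (W * Z)) = (K + 1) * M * (Y * Z) * (K * (M + 1) * (W * X)) by ring.
have E2 : K * M * (X * Y) * ((K - 1) * (M - 1) * (X * Y)) = K * (M - 1) * (X * X) * ((K - 1) * M * (Y * Y)) by ring.
rewrite E1 E2; apply: P.
- apply: mulr_ge0; [apply: mulr_ge0; lra| apply: mulr_ge0; lra].
- apply: mulr_ge0; [apply: mulr_ge0; lra| apply: mulr_ge0; lra].
Qed.

Lemma cpos (R : realFieldType) (a b : R) n k : a <= 0 -> b < 0 -> 0 < - a + n%:R + - b * k.+1%:R.
Proof.
move=> ha hb; have h1 := ler0n R n; have h2 : 0 < k.+1%:R :> R by rewrite ltr0n.
have : 0 < - b * k.+1%:R by apply: mulr_gt0 => //; lra.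
lra.
Qed.

Lemma c0pos (R : realFieldType) (a : R) n : a <= 0 -> 0 <= - a + n%:R.
Proof. move=> ha; have h1 := ler0n R n; lra. Qed.

Lemma nbpos (R : realFieldType) (b : R) : b < 0 -> 0 < - b.
Proof. move=> hb; lra. Qed.

Section Main.
Variable R : realFieldType.
Variables alpha beta : R.
Hypothesis a0 : alpha <= 0.
Hypothesis b0 : beta < 0.
Local Notation x := (Sab alpha beta).

Lemma Sab_ge0 n k : 0 <= x n k.
Proof.
elim: n k => [|n IH] [|k].
- by rewrite Sab00.
- by rewrite Sab0S.
- rewrite Sab_rec0; apply: mulr_ge0; last exact: IH; exact: c0pos.
- rewrite Sab_rec; apply: addr_ge0; apply: mulr_ge0; try exact: IH.
  + apply: ltW; exact: cpos.
  + apply: ltW; exact: nbpos.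
Qed.

Lemma Sab_big n k : (n < k)%N -> x n k = 0.
Proof.
elim: n k => [|n IH] [|k] //.
- by rewrite Sab0S.
- move=> h; rewrite Sab_rec (IH k.+1) ?(IH k) //; [ring | exact: ltnW].
Qed.

Lemma Sab_diag n : 0 < x n n.
Proof.
elim: n => [|n IH]; first by rewrite Sab00.
rewrite Sab_rec Sab_big // mulr0 add0r; apply: mulr_gt0 => //; exact: nbpos.
Qed.

Lemma Sab_pos n k : (0 < k)%N -> (k <= n)%N -> 0 < x n k.
Proof.
elim: n k => [|n IH] [|k] //.
move=> _ hk; case: (ltngtP k n) => [hlt|hgt|->]; last exact: Sab_diag.
- rewrite Sab_rec.
  have h1 : 0 < (- alpha + n%:R + - beta * k.+1%:R) * x n k.+1.
    by apply: mulr_gt0; [exact: cpos | exact: IH].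
  have h2 : 0 <= - beta * x n k by apply: mulr_ge0; [apply: ltW; exact: nbpos| exact: Sab_ge0].
  apply: (lt_le_trans h1); rewrite lerDl //.
- by move: hk; rewrite ltnS leqNgt hgt.
Qed.
End Main.

From mathcomp Require Import zify.

Lemma natS1 (R : realFieldType) n : (n.+1%:R - 1 : R) = n%:R.
Proof. by rewrite -natr1 addrK. Qed.

Section Main2.
Variable R : realFieldType.
Variables alpha beta : R.
Hypothesis a0 : alpha <= 0.
Hypothesis b0 : beta < 0.
Local Notation x := (Sab alpha beta).

Lemma Sab_ulc n : forall k m, (0 < k)%N -> (0 < m)%N -> (k + m = n.+1)%N ->
  (k%:R + 1) * m%:R * (x n k.-1 * x n k.+1) <= k%:R * (m%:R - 1) * (x n k * x n k).
Proof.
elim: n => [|n IH] k m hk hm hkm; first by lia.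
case: m hm hkm => [//|[|m']] _ hkm.
  have hk1 : k = n.+1 by lia.
  rewrite [x n.+1 k.+1]Sab_big; last by lia.
  by rewrite subrr !mulr0 mul0r.
case: k hk hkm => [//|k'] _ hkm.
have hkm' : (k'.+1 + m'.+1 = n.+1)%N by lia.
set a := - alpha + n%:R; set b := - beta.
set X := x n k'.+1; set Y := x n k'; set Z := x n k'.+2.
set W := if k' is k''.+1 then x n k'' else 0.
set K : R := k'.+1%:R; set M : R := m'.+1%:R.
have a0' : 0 <= a by exact: c0pos.
have b0' : 0 <= b by apply: ltW; exact: nbpos.
have K1 : 1 <= K by rewrite /K ler1n.
have M1 : 1 <= M by rewrite /M ler1n.
have X0 : 0 <= X := Sab_ge0 a0 b0 _ _.
have Y0 : 0 <= Y := Sab_ge0 a0 b0 _ _.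
have Z0 : 0 <= Z := Sab_ge0 a0 b0 _ _.
have W0 : 0 <= W by rewrite /W; case: (k') => [|k'']; [exact: lexx | exact: Sab_ge0].
have H1 : (K + 1) * M * (Y * Z) <= K * (M - 1) * (X * X) by exact: (IH k'.+1 m'.+1).
have H2 : K * (M + 1) * (W * X) <= (K - 1) * M * (Y * Y).
  rewrite /W /K; case E: k' => [|k''].
    by rewrite subrr !mul0r mulr0.
  have h := IH k''.+1 m'.+2 isT isT ltac:(lia).
  rewrite natr1 natS1 -[m'.+2%:R]natr1 /= in h.
  by rewrite /X /Y /M E natS1.
have H3 : (K + 1) * (M + 1) * (W * Z) <= (K - 1) * (M - 1) * (X * Y).
  move: H2; rewrite /W; case E: k' => [|k''] H2.
    by rewrite /K E subrr !mul0r mulr0.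
  apply: H3_lemma => //.
  - by rewrite /X; apply: Sab_pos => //; lia.
  - by rewrite /Y E; apply: Sab_pos => //; lia.
  - by apply: Sab_ge0.
have S := step_ineq a0' b0' K1 M1 X0 Y0 Z0 W0 H1 H2 H3.
have ey0 : x n.+1 k' = (a + b * (K - 1)) * Y + b * W.
  rewrite /W /K /Y /a /b; case E: k' => [|k''].
    rewrite Sab_rec0; ring.
  rewrite Sab_rec; ring.
have ey1 : x n.+1 k'.+1 = (a + b * K) * X + b * Y by rewrite Sab_rec /K /a /b /X /Y; ring.
have ey2 : x n.+1 k'.+2 = (a + b * (K + 1)) * Z + b * X by rewrite Sab_rec /K /a /b /X /Z; ring.
rewrite /= ey0 ey1 ey2 -[m'.+2%:R]natr1 -/M addrK.
exact: S.
Qed.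
End Main2.

Lemma final_alg (R : realFieldType) (K M X Y Z : R) : 0 < K -> 0 < M -> 0 <= Y -> 0 <= Z ->
  (K + 1) * (M + 1) * (Y * Z) <= K * M * (X * X) ->
  (1 + K^-1) * (1 + M^-1) * Z * Y <= X ^+ 2 /\ Z * Y <= X ^+ 2.
Proof.
move=> K0 M0 Y0 Z0 h.
have KM : 0 < K * M by apply: mulr_gt0.
have E : (1 + K^-1) * (1 + M^-1) * Z * Y = ((K + 1) * (M + 1) * (Y * Z)) / (K * M).
  by field; apply/andP; split; rewrite gt_eqF.
have P1 : (1 + K^-1) * (1 + M^-1) * Z * Y <= X ^+ 2.
  rewrite E ler_pdivrMr //; apply: (le_trans h); rewrite expr2 mulrC; exact: lexx.
split => //; apply: le_trans P1.
have c1 : 1 <= (1 + K^-1) * (1 + M^-1).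
  have k1 : 0 <= K^-1 by rewrite invr_ge0 ltW.
  have m1 : 0 <= M^-1 by rewrite invr_ge0 ltW.
  have : 0 <= K^-1 * M^-1 by apply: mulr_ge0.
  nra.
have YZ : 0 <= Z * Y by apply: mulr_ge0.
rewrite -mulrA; nra.
Qed.

Theorem mainTheorem10 (R : realFieldType) (alpha beta : R) :
  alpha <= 0 -> beta < 0 ->
  forall n k : nat, (2 <= n)%N -> (1 <= k)%N -> (k <= n - 1)%N ->
    (1 + (k%:R)^-1) * (1 + ((n - k)%N%:R)^-1)
      * Sab alpha beta n k.+1 * Sab alpha beta n k.-1
    <= Sab alpha beta n k ^+ 2
  /\ Sab alpha beta n k.+1 * Sab alpha beta n k.-1 <= Sab alpha beta n k ^+ 2.
Proof.
move=> a0 b0 n k hn hk hkn.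
have h := Sab_ulc a0 b0 (n := n) (k := k) (m := (n - k).+1) hk isT ltac:(lia).
rewrite natS1 -[(n - k).+1%:R]natr1 in h.
apply: final_alg.
- by rewrite ltr0n.
- by rewrite ltr0n; lia.
- exact: Sab_ge0.
- exact: Sab_ge0.
- exact: h.
Qed.
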